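(* Let $E,A,B\in\mathbb{C}^{n,n}$ pairwise commute. Then there exists a nonsingular $U\in\mathbb{C}^{n,n}$ such that $$UEU^{-1}=\mathrm{diag}(J^E,N^E_2,N^E_3,N^E_4),\quad UAU^{-1}=\mathrm{diag}(A_1,J^A,N^A_3,N^A_4),\quad UBU^{-1}=\mathrm{diag}(B_1,B_2,J^B,N^B_4),$$ with conformable square diagonal blocks, where $J^E,J^A,J^B$ are nonsingular and $N^E_2,N^E_3,N^E_4,N^A_3,N^A_4,N^B_4$ are nilpotent. Moreover, if the triple $(E,A,B)$ is regular (i.e. $\det(\lambda E-A-\omega B)$ is not identically zero), then the fourth diagonal blocks are absent (have size zero).
   Context: Blocks of size zero are allowed. *)

(* Defs.v *)
From HB Require Import structures.
From mathcomp Require Import all_boot all_algebra.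
From mathcomp Require Import complex.
From mathcomp Require Import Rstruct.
From Stdlib Require Import Reals.
Set Implicit Arguments. Unset Strict Implicit. Unset Printing Implicit Defensive.
Import GRing.Theory Num.Theory.
Local Open Scope ring_scope.

Notation Cplx := (complex R).

Definition diag4 (F : nzRingType) (n1 n2 n3 n4 : nat)
  (M1 : 'M[F]_n1) (M2 : 'M[F]_n2) (M3 : 'M[F]_n3) (M4 : 'M[F]_n4)
  : 'M[F]_(n1 + (n2 + (n3 + n4))) :=
  block_mx M1 0 0 (block_mx M2 0 0 (block_mx M3 0 0 M4)).

(* A square matrix N is nilpotent: some power of it vanishes.
   (Blocks of size zero are allowed; they are trivially nilpotent.) *)
Definition nilpotent_mx (F : nzRingType) (m : nat) (N : 'M[F]_m) : Prop :=
  exists k : nat, N ^+ k = 0.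

Definition regular_triple (n : nat) (E A B : 'M[Cplx]_n) : Prop :=
  exists lambda omega : Cplx, \det (lambda *: E - A - omega *: B) != 0.

(* Main.v *)
Require Import Defs.
From HB Require Import structures.
From mathcomp Require Import all_boot all_algebra.
From mathcomp Require Import complex.
From mathcomp Require Import Rstruct.
From Stdlib Require Import Reals.
Import GRing.Theory Num.Theory.
Local Open Scope ring_scope.

Set Implicit Arguments. Unset Strict Implicit. Unset Printing Implicit Defensive.

Section Fit.
Variable F : fieldType.
Variable n : nat.
Implicit Types M W X Y : 'M[F]_n.

Lemma pow_le M k : (M ^+ k.+1 <= M ^+ k)%MS.
Proof. by rewrite exprS submxMl. Qed.

Lemma rank_stab M k : \rank (M ^+ k.+1) = \rank (M ^+ k) ->
  forall j, \rank (M ^+ (k + j)) = \rank (M ^+ k).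
Proof.
move=> Hk.
have E1 : (M ^+ k.+1 :=: M ^+ k)%MS.
  apply/eqmxP; rewrite -(mxrank_leqif_eq (pow_le M k)) Hk //.
suff: forall j, (M ^+ (k + j) :=: M ^+ k)%MS by move=> H j; rewrite (H j).
elim=> [|j IH]; first by rewrite addn0.
rewrite addnS exprSr.
apply: eqmx_trans (eqmxMr M IH) _.
by rewrite mulmxE -exprSr.
Qed.

Lemma rank_exists M : exists2 j, (j <= n)%nat & \rank (M ^+ j.+1) = \rank (M ^+ j).
Proof.
have H : forall k, (exists2 j, (j < k)%nat & \rank (M ^+ j.+1) = \rank (M ^+ j))
   \/ (\rank (M ^+ k) + k <= n)%nat.
  elim=> [|k [[j Hj Hr]|IH]].
  - by right; rewrite expr0 addn0 mxrank1.
  - by left; exists j => //; apply: ltnW.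
  - have := mxrankS (pow_le M k).
    rewrite leq_eqVlt => /orP[/eqP Heq|Hlt].
      by left; exists k.
    by right; rewrite addnS; apply: leq_trans IH; rewrite ltn_add2r.
case: (H n.+1) => [[j Hj Hr]|]; first by exists j.
by rewrite addnS ltnNge leq_addl.
Qed.

Lemma fitting M : (M ^+ n.+1 :&: kermx (M ^+ n.+1))%MS = 0.
Proof.
have [j Hj Hr] := rank_exists M.
have St := rank_stab Hr.
have E1 : \rank (M ^+ n.+1) = \rank (M ^+ j).
  by rewrite -(subnKC (leqW Hj)) St.
have E2 : \rank (M ^+ n.+1 *m M ^+ n.+1) = \rank (M ^+ j).
  rewrite mulmxE -exprD -(subnKC (leqW Hj)) -addnA St //.
have := mxrank_mul_ker (M ^+ n.+1) (M ^+ n.+1).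
rewrite E1 E2 -{2}[\rank (M ^+ j)]addn0 => /eqP; rewrite eqn_add2l mxrank_eq0.
by move/eqP.
Qed.

Lemma disj M m1 m2 (A : 'M_(m1, n)) (B : 'M_(m2, n)) : (A <= M ^+ n.+1)%MS -> (B <= kermx (M ^+ n.+1))%MS ->
  (A :&: B)%MS = 0.
Proof.
move=> HA HB; apply/eqP; rewrite -submx0.
by rewrite -(fitting M); apply: capmxS.
Qed.

Definition stab W X := (W *m X <= W)%MS.

Lemma stabX W X k : stab W X -> stab W (X ^+ k).
Proof.
rewrite /stab => H; elim: k => [|k IH]; first by rewrite expr0 mulmx1.
rewrite exprSr -mulmxE mulmxA; apply: submx_trans _ H.
by apply: submxMr.
Qed.

Lemma ker_pow M : (kermx M <= kermx (M ^+ n.+1))%MS.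
Proof.
by apply/sub_kermxP; rewrite exprS -mulmxE mulmxA mulmx_ker mul0mx.
Qed.

Definition Pim M W := W *m M ^+ n.+1.
Definition Kker M W := (W :&: kermx (M ^+ n.+1))%MS.

Lemma Pim_sub M W : (Pim M W <= M ^+ n.+1)%MS.
Proof. exact: submxMl. Qed.
Lemma Kker_sub M W : (Kker M W <= kermx (M ^+ n.+1))%MS.
Proof. exact: capmxSr. Qed.
Lemma Kker_subW M W : (Kker M W <= W)%MS.
Proof. exact: capmxSl. Qed.
Lemma Pim_subW M W : stab W M -> (Pim M W <= W)%MS.
Proof. by move=> H; apply: (stabX _ H). Qed.
Lemma rank_PK M W : (\rank (Pim M W) + \rank (Kker M W))%nat = \rank W.
Proof. exact: mxrank_mul_ker. Qed.

Lemma stab_Pim M W X : X *m M = M *m X -> stab W X -> stab (Pim M W) X.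
Proof.
move=> c H; rewrite /stab /Pim -mulmxA.
have -> : M ^+ n.+1 *m X = X *m M ^+ n.+1.
  have := commrX n.+1 (c : GRing.comm X M). by rewrite /GRing.comm -!mulmxE => ->.
by rewrite mulmxA submxMr.
Qed.

Lemma stab_Kker M W X : X *m M = M *m X -> stab W X -> stab (Kker M W) X.
Proof.
move=> c H; rewrite /stab /Kker sub_capmx; apply/andP; split.
  by apply: submx_trans H; apply: submxMr; apply: capmxSl.
apply/sub_kermxP; rewrite -mulmxA.
have -> : X *m M ^+ n.+1 = M ^+ n.+1 *m X.
  have := commrX n.+1 (c : GRing.comm X M). by rewrite /GRing.comm -!mulmxE => ->.
by rewrite mulmxA (sub_kermxP (capmxSr _ _)) mul0mx.
Qed.

Definition restr m (rb : 'M[F]_(m, n)) X : 'M_m := rb *m X *m pinvmx rb.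

Lemma restrP V X : stab V X -> row_base V *m X = restr (row_base V) X *m row_base V.
Proof.
move=> H; rewrite /restr mulmxKpV //.
by rewrite (eqmxMr X (eq_row_base V)) eq_row_base.
Qed.

Lemma restrX m (rb : 'M_(m, n)) X Xr : rb *m X = Xr *m rb ->
  forall k, rb *m X ^+ k = Xr ^+ k *m rb.
Proof.
move=> H; elim=> [|k IH]; first by rewrite !expr0 mulmx1 mul1mx.
by rewrite !exprSr -!mulmxE !mulmxA IH -!mulmxA H.
Qed.

Lemma restr_nil V M : stab V M -> (V <= kermx (M ^+ n.+1))%MS ->
  (restr (row_base V) M) ^+ n.+1 = 0.
Proof.
move=> H HV; apply: (row_free_inj (row_base_free V)) => /=.
rewrite -(restrX (restrP H)) mul0mx; apply/sub_kermxP.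
by rewrite eq_row_base.
Qed.

Lemma restr_unit V M : stab V M -> (V <= M ^+ n.+1)%MS ->
  restr (row_base V) M \in unitmx.
Proof.
move=> H HV; rewrite -row_free_unit /row_free.
have Hr : \rank (row_base V *m M) = \rank (row_base V).
  apply/mxrank_injP; apply/eqP; apply: (disj (M := M)).
    by rewrite eq_row_base.
  exact: ker_pow.
rewrite eqn_leq rank_leq_row /=.
have := mxrankM_maxl (restr (row_base V) M) (row_base V).
rewrite -(restrP H) Hr.
by rewrite (eqP (row_base_free V)).
Qed.

Lemma restr_comm m (rb : 'M_(m, n)) X Y Xr Yr : row_free rb ->
  rb *m X = Xr *m rb -> rb *m Y = Yr *m rb -> X *m Y = Y *m X ->
  Xr *m Yr = Yr *m Xr.
Proof.
move=> fr HX HY c; apply: (row_free_inj fr) => /=.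
by rewrite -!mulmxA -HX -HY !mulmxA -HX -HY -!mulmxA c.
Qed.

End Fit.

Lemma nilD (R : pzRingType) (x y : R) i j : GRing.comm x y -> x ^+ i = 0 -> y ^+ j = 0 ->
  (x + y) ^+ (i + j) = 0.
Proof.
move=> c hx hy; rewrite exprDn_comm //; apply: big1 => [[k Hk]] _ /=.
case: (leqP j k) => Hjk.
  by rewrite -(subnKC Hjk) exprD hy mul0r mulr0 mul0rn.
have : (i <= i + j - k)%nat by rewrite -addnBA ?leq_addr // ltnW.
move=> /subnKC <-; by rewrite exprD hx !mul0r mul0rn.
Qed.

Lemma nilM (R : pzRingType) (x y : R) i : GRing.comm y x -> x ^+ i = 0 -> (y * x) ^+ i = 0.
Proof. by move=> c hx; rewrite exprMn_comm // hx mulr0. Qed.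

Lemma cast_conj (F : fieldType) m n (H : m = n) (U0 : 'M[F]_(m, n)) (D : 'M_m) (X : 'M_n) :
  row_full U0 -> U0 *m X = D *m U0 ->
  castmx (H, erefl n) U0 *m X *m invmx (castmx (H, erefl n) U0) = castmx (H, H) D.
Proof.
case: n / H X U0 => X U0 fr e; rewrite !castmx_id.
by rewrite e mulmxK // -row_full_unit.
Qed.

Lemma cast_unit (F : fieldType) m n (H : m = n) (U0 : 'M[F]_(m, n)) :
  row_full U0 -> castmx (H, erefl n) U0 \in unitmx.
Proof. by case: n / H U0 => U0 fr; rewrite castmx_id -row_full_unit. Qed.

Lemma rank_col (F : fieldType) m1 m2 n (A : 'M[F]_(m1, n)) (B : 'M_(m2, n)) :
  (A :&: B)%MS = 0 -> \rank (col_mx A B) = (\rank A + \rank B)%nat.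
Proof. by move=> H; rewrite -addsmxE mxrank_disjoint_sum. Qed.

Definition diag4' (F : nzRingType) (n1 n2 n3 n4 : nat)
  (M1 : 'M[F]_n1) (M2 : 'M[F]_n2) (M3 : 'M[F]_n3) (M4 : 'M[F]_n4)
  : 'M[F]_(n1 + (n2 + (n3 + n4))) :=
  block_mx M1 0 0 (block_mx M2 0 0 (block_mx M3 0 0 M4)).

Lemma diag_act (F : fieldType) n n1 n2 n3 n4 (r1 : 'M[F]_(n1, n)) (r2 : 'M_(n2, n))
  (r3 : 'M_(n3, n)) (r4 : 'M_(n4, n)) X X1 X2 X3 X4 :
  r1 *m X = X1 *m r1 -> r2 *m X = X2 *m r2 -> r3 *m X = X3 *m r3 -> r4 *m X = X4 *m r4 ->
  col_mx r1 (col_mx r2 (col_mx r3 r4)) *m X =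
  diag4' X1 X2 X3 X4 *m col_mx r1 (col_mx r2 (col_mx r3 r4)).
Proof.
move=> h1 h2 h3 h4.
by rewrite /diag4' !(mul_block_col, mul_row_col, mul_col_mx, mul0mx, addr0, add0r) h1 h2 h3 h4.
Qed.

Lemma arith4 (a b c d k1 k2 m : nat) : (c + d)%nat = k2 -> (b + k2)%nat = k1 ->
  (a + k1)%nat = m -> (a + (b + (c + d)))%nat = m.
Proof. by move=> <- <-. Qed.

Lemma commS (F : fieldType) k (a b : F) (X Y : 'M[F]_k) : X *m Y = Y *m X ->
  GRing.comm (a%:M *m X) (b%:M *m Y).
Proof.
move=> c; rewrite /GRing.comm -!mulmxE !mul_scalar_mx.
by rewrite -scalemxAl -scalemxAr -scalemxAl -scalemxAr c !scalerA mulrC.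
Qed.

Lemma unitX (F : fieldType) k (M : 'M[F]_k) j : M \in unitmx -> M ^+ j \in unitmx.
Proof.
move=> H; elim: j => [|j IH]; first by rewrite expr0 unitmx1.
by rewrite exprSr -mulmxE unitmx_mul IH H.
Qed.

Lemma main (F : fieldType) (n : nat) (E A B : 'M[F]_n) :
  E *m A = A *m E -> E *m B = B *m E -> A *m B = B *m A ->
  exists (n1 n2 n3 n4 : nat) (Hn : (n1 + (n2 + (n3 + n4)))%N = n)
         (U : 'M[F]_n)
         (JE : 'M[F]_n1) (NE2 : 'M[F]_n2) (NE3 : 'M[F]_n3) (NE4 : 'M[F]_n4)
         (A1 : 'M[F]_n1) (JA : 'M[F]_n2) (NA3 : 'M[F]_n3) (NA4 : 'M[F]_n4)
         (B1 : 'M[F]_n1) (B2 : 'M[F]_n2) (JB : 'M[F]_n3) (NB4 : 'M[F]_n4),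
    [/\ U \in unitmx,
        [/\ U *m E *m invmx U = castmx (Hn, Hn) (diag4 JE NE2 NE3 NE4),
        U *m A *m invmx U = castmx (Hn, Hn) (diag4 A1 JA NA3 NA4)
        & U *m B *m invmx U = castmx (Hn, Hn) (diag4 B1 B2 JB NB4)],
        [/\ JE \in unitmx, JA \in unitmx & JB \in unitmx],
        ([/\ nilpotent_mx NE2, nilpotent_mx NE3, nilpotent_mx NE4,
            nilpotent_mx NA3 & nilpotent_mx NA4] /\ nilpotent_mx NB4)
      & ((exists l w : F, \det (l *: E - A - w *: B) != 0) -> n4 = 0%N)].
Proof.
move=> cEA cEB cAB.
pose V1 := Pim E (1%:M : 'M_n). pose K1 := Kker E (1%:M : 'M_n).
pose V2 := Pim A K1. pose K2 := Kker A K1.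
pose V3 := Pim B K2. pose V4 := Kker B K2.
have s0 : forall Z : 'M[F]_n, stab (1%:M : 'M_n) Z.
  by move=> Z; rewrite /stab submx1.
have sV1 (Z : 'M[F]_n) : Z *m E = E *m Z -> stab V1 Z by move=> c; apply: stab_Pim c (s0 Z).
have sK1 (Z : 'M[F]_n) : Z *m E = E *m Z -> stab K1 Z by move=> c; apply: stab_Kker c (s0 Z).
have sV2 (Z : 'M[F]_n) : Z *m E = E *m Z -> Z *m A = A *m Z -> stab V2 Z.
  by move=> c1 c2; apply: stab_Pim c2 (sK1 Z c1).
have sK2 (Z : 'M[F]_n) : Z *m E = E *m Z -> Z *m A = A *m Z -> stab K2 Z.
  by move=> c1 c2; apply: stab_Kker c2 (sK1 Z c1).
have sV3 (Z : 'M[F]_n) : Z *m E = E *m Z -> Z *m A = A *m Z -> Z *m B = B *m Z -> stab V3 Z.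
  by move=> c1 c2 c3; apply: stab_Pim c3 (sK2 Z c1 c2).
have sV4 (Z : 'M[F]_n) : Z *m E = E *m Z -> Z *m A = A *m Z -> Z *m B = B *m Z -> stab V4 Z.
  by move=> c1 c2 c3; apply: stab_Kker c3 (sK2 Z c1 c2).
have cEE : E *m E = E *m E by [].
have cAA : A *m A = A *m A by [].
have cBB : B *m B = B *m B by [].
have cAE := esym cEA. have cBE := esym cEB. have cBA := esym cAB.
have hV2K1 : (V2 <= K1)%MS by apply: Pim_subW; apply: sK1.
have hK2K1 : (K2 <= K1)%MS by apply: Kker_subW.
have hV3K2 : (V3 <= K2)%MS by apply: Pim_subW; apply: sK2.
have hV4K2 : (V4 <= K2)%MS by apply: Kker_subW.
have Hn : (\rank V1 + (\rank V2 + (\rank V3 + \rank V4)))%nat = n.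
  have e3 : (\rank V3 + \rank V4)%nat = \rank K2 := rank_PK B K2.
  have e2 : (\rank V2 + \rank K2)%nat = \rank K1 := rank_PK A K1.
  have e1 : (\rank V1 + \rank K1)%nat = \rank (1%:M : 'M[F]_n) := rank_PK E 1%:M.
  exact: (arith4 e3 e2 (etrans e1 (mxrank1 _ _))).
have pE1 : (V1 <= E ^+ n.+1)%MS by apply: Pim_sub.
have pA2 : (V2 <= A ^+ n.+1)%MS by apply: Pim_sub.
have pB3 : (V3 <= B ^+ n.+1)%MS by apply: Pim_sub.
have kK1 : (K1 <= kermx (E ^+ n.+1))%MS by apply: Kker_sub.
have kK2 : (K2 <= kermx (A ^+ n.+1))%MS by apply: Kker_sub.
have kV4B : (V4 <= kermx (B ^+ n.+1))%MS by apply: Kker_sub.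
have kV2E : (V2 <= kermx (E ^+ n.+1))%MS by apply: submx_trans kK1.
have kV3E : (V3 <= kermx (E ^+ n.+1))%MS by apply: submx_trans kK1; apply: submx_trans hK2K1.
have kV4E : (V4 <= kermx (E ^+ n.+1))%MS by apply: submx_trans kK1; apply: submx_trans hK2K1.
have kV3A : (V3 <= kermx (A ^+ n.+1))%MS by apply: submx_trans kK2.
have kV4A : (V4 <= kermx (A ^+ n.+1))%MS by apply: submx_trans kK2.
clear hV2K1 hK2K1 hV3K2 hV4K2 kK1 kK2 sK1 sK2 s0.
clearbody V1 V2 V3 V4.
clear K1 K2.
pose U0 := col_mx (row_base V1) (col_mx (row_base V2) (col_mx (row_base V3) (row_base V4))).
have fr : row_full U0.
  rewrite /row_full /U0 rank_col; last first.
    apply: (@disj F n E); first by rewrite eq_row_base.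
    by rewrite !col_mx_sub !eq_row_base kV2E kV3E kV4E.
  rewrite rank_col; last first.
    apply: (@disj F n A); first by rewrite eq_row_base.
    by rewrite !col_mx_sub !eq_row_base kV3A kV4A.
  rewrite rank_col; last first.
    apply: (@disj F n B); first by rewrite eq_row_base.
    by rewrite eq_row_base.
  by rewrite !eq_row_base Hn.
exists (\rank V1), (\rank V2), (\rank V3), (\rank V4), Hn, (castmx (Hn, erefl n) U0).
exists (restr (row_base V1) E), (restr (row_base V2) E), (restr (row_base V3) E), (restr (row_base V4) E).
exists (restr (row_base V1) A), (restr (row_base V2) A), (restr (row_base V3) A), (restr (row_base V4) A).
exists (restr (row_base V1) B), (restr (row_base V2) B), (restr (row_base V3) B), (restr (row_base V4) B).
split.
- exact: cast_unit.
- split; apply: cast_conj => //; apply: diag_act; apply: restrP; by [apply: sV1|apply: sV2|apply: sV3|apply: sV4].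
- split; apply: restr_unit.
  + exact: sV1.
  + exact: pE1.
  + exact: sV2.
  + exact: pA2.
  + exact: sV3.
  + exact: pB3.
- split; first split.
  + by exists n.+1; apply: restr_nil; [exact: sV2 | exact: kV2E].
  + by exists n.+1; apply: restr_nil; [exact: sV3 | exact: kV3E].
  + by exists n.+1; apply: restr_nil; [exact: sV4 | exact: kV4E].
  + by exists n.+1; apply: restr_nil; [exact: sV3 | exact: kV3A].
  + by exists n.+1; apply: restr_nil; [exact: sV4 | exact: kV4A].
  + by exists n.+1; apply: restr_nil; [exact: sV4 | exact: kV4B].
- move=> [l [w Hdet]].
  have hE4 := restrP (sV4 E cEE cEA cEB).
  have hA4 := restrP (sV4 A cAE cAA cAB).
  have hB4 := restrP (sV4 B cBE cBA cBB).
  have nE : (restr (row_base V4) E) ^+ n.+1 = 0 by apply: restr_nil; [exact: sV4 | exact: kV4E].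
  have nA : (restr (row_base V4) A) ^+ n.+1 = 0 by apply: restr_nil; [exact: sV4 | exact: kV4A].
  have nB : (restr (row_base V4) B) ^+ n.+1 = 0 by apply: restr_nil; [exact: sV4 | exact: kV4B].
  move: hE4 hA4 hB4 nE nA nB.
  set NE := restr (row_base V4) E; set NA := restr (row_base V4) A.
  set NB := restr (row_base V4) B => hE4 hA4 hB4 nE nA nB.
  have fr4 := row_base_free V4.
  have cEA4 : NE *m NA = NA *m NE := restr_comm fr4 hE4 hA4 cEA.
  have cEB4 : NE *m NB = NB *m NE := restr_comm fr4 hE4 hB4 cEB.
  have cAB4 : NA *m NB = NB *m NA := restr_comm fr4 hA4 hB4 cAB.
  pose Y := l%:M *m NE + (-1)%:M *m NA + (- w)%:M *m NB.
  have hY : row_base V4 *m (l *: E - A - w *: B) = Y *m row_base V4.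
    rewrite /Y !mul_scalar_mx scaleN1r scaleNr !mulmxBr !mulmxDl !mulNmx.
    by rewrite -!scalemxAr -!scalemxAl hE4 hA4 hB4.
  have nY : Y ^+ (n.+1 + n.+1 + n.+1) = 0.
    apply: nilD.
    - apply: commr_sym; apply: commrD; apply: commS.
      + by rewrite cEB4.
      + by rewrite cAB4.
    - apply: nilD.
      + exact: commS.
      + by apply: nilM nE; rewrite /GRing.comm -!mulmxE scalar_mxC.
      + by apply: nilM nA; rewrite /GRing.comm -!mulmxE scalar_mxC.
    - by apply: nilM nB; rewrite /GRing.comm -!mulmxE scalar_mxC.
  have hk := restrX hY (n.+1 + n.+1 + n.+1).
  rewrite nY mul0mx in hk.
  have Mu : (l *: E - A - w *: B) \in unitmx by rewrite unitmxE unitfE.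
  have h0 := mulmxK (unitX (n.+1 + n.+1 + n.+1) Mu) (row_base V4).
  rewrite hk mul0mx in h0.
  have -> : \rank V4 = \rank (row_base V4) by rewrite eq_row_base.
  by rewrite -h0 mxrank0.
Qed.

Theorem theorem5 (n : nat) (E A B : 'M[Cplx]_n) :
  E *m A = A *m E -> E *m B = B *m E -> A *m B = B *m A ->
  exists (n1 n2 n3 n4 : nat) (Hn : (n1 + (n2 + (n3 + n4)))%N = n)
         (U : 'M[Cplx]_n)
         (JE : 'M[Cplx]_n1) (NE2 : 'M[Cplx]_n2) (NE3 : 'M[Cplx]_n3) (NE4 : 'M[Cplx]_n4)
         (A1 : 'M[Cplx]_n1) (JA : 'M[Cplx]_n2) (NA3 : 'M[Cplx]_n3) (NA4 : 'M[Cplx]_n4)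
         (B1 : 'M[Cplx]_n1) (B2 : 'M[Cplx]_n2) (JB : 'M[Cplx]_n3) (NB4 : 'M[Cplx]_n4),
    [/\ U \in unitmx,
        [/\ U *m E *m invmx U = castmx (Hn, Hn) (diag4 JE NE2 NE3 NE4),
        U *m A *m invmx U = castmx (Hn, Hn) (diag4 A1 JA NA3 NA4)
        & U *m B *m invmx U = castmx (Hn, Hn) (diag4 B1 B2 JB NB4)],
        [/\ JE \in unitmx, JA \in unitmx & JB \in unitmx],
        ([/\ nilpotent_mx NE2, nilpotent_mx NE3, nilpotent_mx NE4,
            nilpotent_mx NA3 & nilpotent_mx NA4] /\ nilpotent_mx NB4)
      & (regular_triple E A B -> n4 = 0%N)].
Proof. exact: main. Qed.
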